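(* Let $G$ be a locally compact group and let $f,g,f_1,\dots,f_n,g_1,\dots,g_n\in C_0(G)$ be non-zero functions such that $f(xy)g(y)=\sum_{i=1}^n f_i(x)g_i(y)$ for all $x,y\in G$. Then $G$ has a compact open subgroup $H$, and there are functions $f'_j\in C_0(G)$ and $g'_j\in C(H)$ ($j=1,\dots,n$) such that $f(xy)=\sum_{j=1}^n f'_j(x)g'_j(y)$ for all $x\in G$, $y\in H$.
   Context: $C_0(G)$ denotes the continuous complex functions on $G$ vanishing at infinity. *)

(* Defs.v *)
From HB Require Import structures.
From mathcomp Require Import all_boot all_order all_algebra.
From mathcomp Require Import all_classical all_reals all_analysis.
From mathcomp Require Import complex.
Set Implicit Arguments. Unset Strict Implicit. Unset Printing Implicit Defensive.
Import Order.TTheory GRing.Theory Num.Theory.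
Import numFieldTopology.Exports numFieldNormedType.Exports.
Local Open Scope classical_set_scope.
Local Open Scope ring_scope.

Definition Cplx (R : realType) : numClosedFieldType := R[i].

Definition is_topological_group (G : topologicalType)
    (mul : G -> G -> G) (inv : G -> G) (one : G) : Prop :=
  [/\ (forall x y z, mul x (mul y z) = mul (mul x y) z),
      (forall x, mul one x = x),
      (forall x, mul (inv x) x = one),
      continuous (fun p : G * G => mul p.1 p.2) &
      continuous inv].

Definition is_locally_compact_group (G : topologicalType)
    (mul : G -> G -> G) (inv : G -> G) (one : G) : Prop :=
  [/\ is_topological_group mul inv one,
      hausdorff_space G &
      locally_compact [set: G]].

Definition is_subgroup (G : Type) (mul : G -> G -> G) (inv : G -> G)
    (one : G) (H : set G) : Prop :=
  [/\ H one, (forall x y, H x -> H y -> H (mul x y)) &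
      (forall x, H x -> H (inv x))].

Definition C0 (R : realType) (G : topologicalType) (f : G -> Cplx R) : Prop :=
  continuous f /\
  forall eps : R, 0 < eps ->
    exists K : set G, compact K /\ forall x, ~ K x -> `|f x| < (eps%:C)%C.

(* Main.v *)
Require Import Defs.
From HB Require Import structures.
From mathcomp Require Import all_boot all_order all_algebra.
From mathcomp Require Import all_classical all_reals all_analysis.
From mathcomp Require Import complex.
Import Order.TTheory GRing.Theory Num.Theory.
Import numFieldTopology.Exports numFieldNormedType.Exports.
Local Open Scope classical_set_scope.
Local Open Scope ring_scope.

Set Implicit Arguments. Unset Strict Implicit. Unset Printing Implicit Defensive.

Section Grp.
Variables (G : topologicalType) (mul : G -> G -> G) (inv : G -> G) (one : G).
Hypothesis hG : is_topological_group mul inv one.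

Lemma gA x y z : mul x (mul y z) = mul (mul x y) z.
Proof. by case: hG. Qed.
Lemma g1x x : mul one x = x.
Proof. by case: hG. Qed.
Lemma gVx x : mul (inv x) x = one.
Proof. by case: hG. Qed.
Lemma gxV x : mul x (inv x) = one.
Proof.
rewrite -[LHS]g1x -[in mul one _](gVx (inv x)) -gA [mul (inv x) (mul x _)]gA.
by rewrite gVx g1x gVx.
Qed.
Lemma gx1 x : mul x one = x.
Proof. by rewrite -(gVx x) gA gxV g1x. Qed.
Lemma gVK x : inv (inv x) = x.
Proof. by rewrite -[LHS]gx1 -(gVx x) gA gVx g1x. Qed.
Lemma gKl x y : mul (inv x) (mul x y) = y.
Proof. by rewrite gA gVx g1x. Qed.
Lemma gKr x y : mul x (mul (inv x) y) = y.
Proof. by rewrite gA gxV g1x. Qed.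
Lemma inv_uniq a b : mul a b = one -> b = inv a.
Proof. by move=> h; rewrite -(gKl a b) h gx1. Qed.
Lemma gVM x y : inv (mul x y) = mul (inv y) (inv x).
Proof.
apply/esym/inv_uniq; rewrite -gA [mul y (mul (inv y) _)]gA gxV g1x.
exact: gxV.
Qed.
Lemma gV1 : inv one = one.
Proof. by rewrite -[LHS]g1x gxV. Qed.

Lemma cont_pair : continuous (fun p : G * G => mul p.1 p.2).
Proof. by case: hG. Qed.
Lemma cont_inv : continuous inv.
Proof. by case: hG. Qed.
Lemma cont_mul2 (T : topologicalType) (a b : T -> G) x :
  {for x, continuous a} -> {for x, continuous b} ->
  {for x, continuous (fun z => mul (a z) (b z))}.
Proof.
move=> ca cb.
have cp : {for x, continuous (fun z => (a z, b z))} by exact: cvg_pair.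
have cP := cont_pair; exact: (continuous_comp cp (cP (a x, b x))).
Qed.
Lemma cont_cst (T : topologicalType) (c : G) : continuous (fun _ : T => c).
Proof. by move=> x; exact: cvg_cst. Qed.
Lemma cont_id : continuous (fun z : G => z).
Proof. by move=> x; exact: cvg_id. Qed.
Lemma cont_mull a : continuous (fun z => mul a z).
Proof. by move=> x; apply: cont_mul2; [exact: cont_cst|exact: cont_id]. Qed.
Lemma cont_mulr a : continuous (fun z => mul z a).
Proof. by move=> x; apply: cont_mul2; [exact: cont_id|exact: cont_cst]. Qed.
End Grp.
Arguments cont_mull {G mul inv one} hG a _.
Arguments cont_mulr {G mul inv one} hG a _.
Arguments cont_cst {G} {T} c _.
Arguments cont_inv {G mul inv one} hG _.


Lemma open_normlt (K : numFieldType) (r : K) : open [set z : K | `|z| < r].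
Proof.
rewrite openE => z /= hz; apply/nbhs_ballP; exists (r - `|z|).
- by rewrite /= subr_gt0.
move=> w; rewrite -ball_normE /= => hw.
have := ler_normD z (w - z); rewrite addrC subrK => h.
apply: (le_lt_trans h); rewrite -ltrBrDl; by rewrite -normrN opprB.
Qed.

Lemma natC (R : realType) (k : nat) : (k%:R : R[i]) = (k%:R : R)%:C%C.
Proof. by rewrite -(rmorph_nat (real_complex R)). Qed.
Lemma normC_trunc (R : realType) (z : R[i]) : `|z| < (Num.trunc (complex.Re `|z|)).+1%:R.
Proof. by rewrite natC -(RRe_real (normr_real z)) ltcR truncnS_gt. Qed.

Section C0lemmas.
Variables (R : realType) (G : topologicalType).

Lemma C0_eps (f : G -> Cplx R) : C0 f -> forall eps : Cplx R, 0 < eps ->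
  exists K : set G, compact K /\ forall x, ~ K x -> `|f x| < eps.
Proof.
case=> _ hf eps he.
have /RRe_real epsE := gtr0_real he.
have e0 : 0 < complex.Re eps by rewrite -ltcR epsE.
have [K [cK hK]] := hf _ e0; exists K; split => // x /hK.
by rewrite epsE.
Qed.

Lemma C0_bound (f : G -> Cplx R) : C0 f -> exists M : Cplx R, forall x, `|f x| <= M.
Proof.
move=> hf; have [K1 [cK1 hK1]] := C0_eps hf (ltr01 : (0 : Cplx R) < 1).
case: hf => cf _.
have cI : compact (f @` K1).
  by apply: continuous_compact => //; apply: continuous_subspaceT.
move: cI; rewrite compact_cover => /(_ nat setT
  (fun n => [set z : Cplx R | `|z| < n.+1%:R])) [].
- by move=> n _; exact: open_normlt.
- by move=> z _; exists (Num.trunc (complex.Re `|z|)) => //=; exact: normC_trunc.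
move=> D' _ hD'.
exists ((\max_(i <- finmap.enum_fset D') i).+1)%:R => x.
have [Kx|nKx] := pselect (K1 x); last first.
  apply: ltW; apply: (lt_le_trans (hK1 _ nKx)).
  by rewrite ler1n.
have [i /= iD hi] := hD' (f x) (ex_intro2 _ _ x Kx erefl).
apply: ltW; apply: (lt_le_trans hi); rewrite ler_nat ltnS.
exact: leq_bigmax_seq.
Qed.

Lemma C0_zero : C0 (fun _ : G => 0 : Cplx R).
Proof.
split; first by move=> x; exact: cvg_cst.
move=> eps he; exists set0; split; first exact: compact0.
by move=> x _; rewrite normr0 ltcR.
Qed.

End C0lemmas.

Lemma nbhs_nz (K : numFieldType) (c : K) : c != 0 -> \forall w \near c, w != 0.
Proof.
move=> c0; apply/nbhs_ballP; exists `|c|; first by rewrite /= normr_gt0.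
move=> w; rewrite -ball_normE /= => hw; apply/eqP => w0.
by move: hw; rewrite w0 subr0 ltxx.
Qed.

Lemma cont_sum (T : topologicalType) (K : numFieldType) (I : Type) (s : seq I)
  (F : I -> T -> K) x : (forall i, {for x, continuous (F i)}) ->
  {for x, continuous (fun y => \sum_(i <- s) F i y)}.
Proof.
move=> hF; elim: s => [|a s ih].
  have -> : (fun y => \sum_(i <- [::]) F i y) = fun=> 0.
    by apply: funext => y; rewrite big_nil.
  exact: cvg_cst.
have -> : (fun y => \sum_(i <- a :: s) F i y) = F a + (fun y => \sum_(i <- s) F i y).
  by apply: funext => y; rewrite big_cons.
exact: continuousD.
Qed.


Lemma schur_det (F : fieldType) d (A : 'M[F]_d) (c : 'M[F]_(d, 1)) (r : 'M[F]_(1, d))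
  (s : 'M[F]_1) : A \in unitmx ->
  \det (block_mx A c r s) = \det A * \det (s - r *m invmx A *m c).
Proof.
move=> uA.
have -> : block_mx A c r s = block_mx 1%:M 0 (r *m invmx A) 1%:M *m
   block_mx A c 0 (s - r *m invmx A *m c).
  rewrite mulmx_block !mul1mx !mul0mx ?mulmx0 !addr0 ?add0r.
  by rewrite mulmxKV // addrC subrK.
by rewrite det_mulmx det_lblock det_ublock !det1 !mul1r.
Qed.

Lemma split_lshift m n (i : 'I_m) : fintype.split (lshift n i) = inl i.
Proof. exact: (unsplitK (inl _ i)). Qed.
Lemma split_rshift m n (i : 'I_n) : fintype.split (rshift m i) = inr i.
Proof. exact: (unsplitK (inr _ i)). Qed.

Lemma schur_entry (F : fieldType) d (Ai : 'M[F]_d) (c : 'M[F]_(d, 1)) (r : 'M[F]_(1, d))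
  (s : 'M[F]_1) : (s - r *m Ai *m c) 0 0 =
  s 0 0 - \sum_(k < d) r 0 k * \sum_(l < d) Ai k l * c l 0.
Proof.
rewrite !mxE; congr (_ - _).
under eq_bigr do rewrite mxE mulr_suml.
rewrite exchange_big /=; apply: eq_bigr => k _.
by rewrite mulr_sumr; apply: eq_bigr => l _; rewrite mulrA.
Qed.

Lemma coef_mx (F : fieldType) d (Ai A : 'M[F]_d) (c : 'I_d -> F) k :
  Ai *m A = 1%:M -> \sum_(l < d) Ai k l * \sum_(j < d) c j * A l j = c k.
Proof.
move=> hAA.
have -> : \sum_(l < d) Ai k l * \sum_(j < d) c j * A l j =
          \sum_(j < d) c j * (Ai *m A) k j.
  under eq_bigr do rewrite mulr_sumr.
  rewrite exchange_big /=; apply: eq_bigr => j _.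
  rewrite mxE mulr_sumr; apply: eq_bigr => l _.
  by rewrite mulrA mulrCA mulrA.
rewrite hAA (bigD1 k) //= mxE eqxx mulr1n mulr1 big1 ?addr0 // => j /negbTE jk.
by rewrite mxE eq_sym jk mulr0n mulr0.
Qed.

Lemma sum_swap (F : comPzRingType) d (a : 'I_d -> F) (C : 'I_d -> 'I_d -> F)
  (u : 'I_d -> F) :
  \sum_(j < d) a j * \sum_(m < d) C j m * u m =
  \sum_(m < d) (\sum_(j < d) a j * C j m) * u m.
Proof.
under eq_bigr do rewrite mulr_sumr.
rewrite exchange_big /=; apply: eq_bigr => m _.
by rewrite mulr_suml; apply: eq_bigr => j _; rewrite mulrA.
Qed.

Lemma widen_sum (K : nmodType) d n (dn : (d <= n)%N) (u : 'I_d -> K) :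
  \sum_(k < d) u k =
  \sum_(j < n) match (insub (val j) : option 'I_d) with Some k => u k | None => 0 end.
Proof.
pose F (i : nat) := match (insub i : option 'I_d) with Some k => u k | None => 0 end.
have -> : \sum_(k < d) u k = \sum_(k < d) F k.
  by apply: eq_bigr => k _; rewrite /F valK.
rewrite (big_ord_widen _ F dn) big_mkcond; apply: eq_bigr => j _.
by case: ifP => // jd; rewrite /F insubF.
Qed.


Section Main.
Variables (R : realType) (G : topologicalType)
    (mul : G -> G -> G) (inv : G -> G) (one : G)
    (n : nat) (f g : G -> Cplx R) (fs gs : 'I_n -> G -> Cplx R).
Hypothesis hG : is_topological_group mul inv one.
Hypothesis hf : C0 f.
Hypothesis hg : C0 g.
Hypothesis hfg : forall x y, f (mul x y) * g y = \sum_(i < n) fs i x * gs i y.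
Variable u0 : G.
Variable x0 : G.
Hypothesis fx0 : f x0 != 0.
Hypothesis gu0 : g u0 != 0.

Definition V := [set y | g (mul u0 y) != 0].

Lemma V_repr y : V y -> forall x, f (mul x y) =
  \sum_(i < n) fs i (mul x (inv u0)) * (gs i (mul u0 y) / g (mul u0 y)).
Proof.
move=> Vy x; have := hfg (mul x (inv u0)) (mul u0 y).
rewrite -(gA hG) (gKl hG) => h.
under eq_bigr do rewrite mulrA.
by rewrite -mulr_suml -h mulfK.
Qed.

Definition Pd (d : nat) : Prop := exists (xs ys : 'I_d -> G),
  (forall k, V (ys k)) /\ (\matrix_(l, k) f (mul (xs l) (ys k))) \in unitmx.

Lemma Pd_le d : Pd d -> (d <= n)%N.
Proof.
case=> xs [ys [hV hu]].
have eM : \matrix_(l, k) f (mul (xs l) (ys k)) =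
  (\matrix_(l, i) fs i (mul (xs l) (inv u0))) *m
  (\matrix_(i, k) (gs i (mul u0 (ys k)) / g (mul u0 (ys k)))).
  apply/matrixP => l k; rewrite !mxE (V_repr (hV k)).
  by apply: eq_bigr => i _; rewrite !mxE.
rewrite eM in hu; move/mxrank_unit: hu => <-.
exact: leq_trans (mxrankM_maxl _ _) (rank_leq_col _).
Qed.

Lemma Pd0 : Pd 0.
Proof.
exists (fun _ => one), (fun _ => one); split; first by case.
by rewrite unitmxE det_mx00 unitr1.
Qed.

Lemma Pd_max : exists d, Pd d /\ forall d', Pd d' -> (d' <= d)%N.
Proof.
have ex : exists i, `[< Pd i >] by exists 0; apply/asboolP; exact: Pd0.
have ub : forall i, `[< Pd i >] -> (i <= n)%N by move=> i /asboolP; exact: Pd_le.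
case: (ex_maxnP ex ub) => d /asboolP Pdd hmax.
by exists d; split => // d' Pd'; apply: hmax; apply/asboolP.
Qed.


Section Fixed.
Variables (d : nat) (xs ys : 'I_d -> G).
Hypothesis hV : forall k, V (ys k).
Let A := \matrix_(l, k) f (mul (xs l) (ys k)).
Hypothesis hA : A \in unitmx.
Hypothesis hmax : forall d', Pd d' -> (d' <= d)%N.

Definition h (k : 'I_d) (y : G) := \sum_(l < d) invmx A k l * f (mul (xs l) y).

Lemma key x y : V y -> f (mul x y) = \sum_(k < d) f (mul x (ys k)) * h k y.
Proof.
move=> Vy.
pose xs' (i : 'I_(d + 1)) := match fintype.split i with inl l => xs l | inr _ => x end.
pose ys' (i : 'I_(d + 1)) := match fintype.split i with inl l => ys l | inr _ => y end.
pose B := \matrix_(i, j) f (mul (xs' i) (ys' j)).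
have nB : B \notin unitmx.
  apply/negP => uB.
  have : Pd (d + 1).
    exists xs', ys'; split => // k; rewrite /ys'.
    by case: (fintype.split k).
  by move/hmax; rewrite addn1 ltnn.
have eA : ulsubmx B = A.
  by apply/matrixP => i j; rewrite !mxE /xs' /ys' !split_lshift.
have := schur_det (ursubmx B) (dlsubmx B) (drsubmx B) hA.
rewrite -eA submxK eA.
have dA : \det A != 0 by rewrite -unitfE -unitmxE.
move: nB; rewrite unitmxE unitfE negbK => /eqP ->.
move/esym/eqP; rewrite mulf_eq0 (negbTE dA) /= det_mx11 schur_entry.
rewrite [drsubmx B 0 0]mxE [dsubmx B 0 _]mxE mxE /xs' /ys' !split_rshift subr_eq0 => /eqP ->.
apply: eq_bigr => k _; rewrite /h !mxE /xs' /ys' split_rshift split_lshift; congr (_ * _).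
by apply: eq_bigr => l _; rewrite !mxE /xs' /ys' split_rshift split_lshift.
Qed.

Lemma coef y (c : 'I_d -> Cplx R) :
  (forall x, f (mul x y) = \sum_(k < d) c k * f (mul x (ys k))) ->
  forall k, h k y = c k.
Proof.
move=> hc k; rewrite /h -[RHS](coef_mx (Ai:=invmx A) (A:=A) c k (mulVmx hA)).
apply: eq_bigr => l _; rewrite hc; congr (_ * _).
by apply: eq_bigr => j _; rewrite mxE.
Qed.

Definition InE (F : G -> Cplx R) := exists c : 'I_d -> Cplx R,
  forall x, F x = \sum_(k < d) c k * f (mul x (ys k)).

Lemma V_InE y : V y -> InE (fun x => f (mul x y)).
Proof.
move=> Vy; exists (fun k => h k y) => x; rewrite (key x Vy).
by apply: eq_bigr => k _; exact: mulrC.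
Qed.

Lemma Phi y : InE (fun x => f (mul x y)) ->
  forall x, f (mul x y) = \sum_(k < d) h k y * f (mul x (ys k)).
Proof. by case=> c hc x; rewrite hc; apply: eq_bigr => k _; rewrite (coef hc). Qed.

Definition Tg b := forall k, InE (fun x => f (mul x (mul b (ys k)))).
Definition Sg b := Tg b /\ Tg (inv b).

Lemma T_one : Tg one.
Proof. by move=> k; rewrite (g1x hG); exact: V_InE. Qed.

Lemma T_mul b b' : Tg b -> Tg b' -> Tg (mul b b').
Proof.
move=> Tb Tb' k.
have [C hC] := choice Tb.
have [c' hc'] := Tb' k.
exists (fun m => \sum_(j < d) c' j * C j m) => x.
rewrite -(gA hG) (gA hG x b) hc' -sum_swap.
by apply: eq_bigr => j _; rewrite -(gA hG) hC.
Qed.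

Lemma S_one : Sg one.
Proof. by split; rewrite ?(gV1 hG); exact: T_one. Qed.

Lemma S_inv b : Sg b -> Sg (inv b).
Proof. by case=> h1 h2; split; rewrite ?(gVK hG). Qed.

Lemma S_mul b b' : Sg b -> Sg b' -> Sg (mul b b').
Proof.
case=> h1 h2 [h3 h4]; split; first exact: T_mul.
by rewrite (gVM hG); exact: T_mul.
Qed.

Definition Nb b := forall k, V (mul b (ys k)) /\ V (mul (inv b) (ys k)).

Lemma N_S b : Nb b -> Sg b.
Proof. by move=> hN; split => k; apply: V_InE; case: (hN k). Qed.

Lemma S_InE b : Sg b -> InE (fun x => f (mul x b)).
Proof.
case=> Tb _.
have V1 : V one by rewrite /V /= (gx1 hG).
have [a ha] := V_InE V1.
have [C hC] := choice Tb.
exists (fun m => \sum_(k < d) a k * C k m) => x.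
rewrite -[mul x b](gx1 hG) ha -sum_swap.
by apply: eq_bigr => k _; rewrite -(gA hG) hC.
Qed.

Lemma S_Phi b : Sg b ->
  forall x, f (mul x b) = \sum_(k < d) h k b * f (mul x (ys k)).
Proof. by move=> Sb; apply: Phi; exact: S_InE. Qed.

Lemma V_nbhs v : V v -> \forall z \near v, V z.
Proof.
move=> Vv.
have contF := continuous_comp (cont_mull hG u0 v) (hg.1 (mul u0 v)).
exact: contF _ (nbhs_nz Vv).
Qed.

Lemma N_near : \forall b \near one, Nb b.
Proof.
apply: filter_forall => k.
have h1 : \forall b \near one, V (mul b (ys k)).
  have c1 := cont_mulr hG (ys k) one.
  have Vn : nbhs (mul one (ys k)) V by rewrite (g1x hG); exact: V_nbhs.
  exact: c1 _ Vn.
have h2 : \forall b \near one, V (mul (inv b) (ys k)).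
  have c2 := cont_mul2 hG (cont_inv hG one) (cont_cst (ys k) one).
  have Vn : nbhs (mul (inv one) (ys k)) V by rewrite (gV1 hG) (g1x hG); exact: V_nbhs.
  exact: c2 _ Vn.
by apply: filterS2 h1 h2 => b.
Qed.

Lemma N_near_at a : \forall z \near a, Nb (mul (inv a) z).
Proof.
have c := cont_mull hG (inv a) a.
have Nn : nbhs (mul (inv a) a) Nb by rewrite (gVx hG); exact: N_near.
exact: c _ Nn.
Qed.

Lemma S_open : open Sg.
Proof.
rewrite openE => b Sb; apply: filterS (N_near_at b) => z Nz.
by have := S_mul Sb (N_S Nz); rewrite (gKr hG).
Qed.

Lemma S_closed : closed Sg.
Proof.
rewrite -openC openE => b nSb; apply: filterS (N_near_at b) => z Nz Sz.
apply: nSb; have := S_mul Sz (S_inv (N_S Nz)).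
by rewrite (gVM hG) (gVK hG) (gKr hG).
Qed.

Lemma h_cont k : continuous (h k).
Proof.
move=> y; apply: cont_sum => l.
apply: continuousM; first exact: cvg_cst.
exact: continuous_comp (cont_mull hG (xs l) y) (hf.1 _).
Qed.

Lemma S_compact : compact Sg.
Proof.
have [Mf hMf] := C0_bound hf.
have Mf0 : 0 <= Mf by apply: le_trans (hMf x0); exact: normr_ge0.
pose Cc := \sum_(k < d) \sum_(l < d) `|invmx A k l| * Mf.
have Cc0 : 0 <= Cc by apply: sumr_ge0 => k _; apply: sumr_ge0 => l _; exact: mulr_ge0.
have hb : forall b k, `|h k b| <= \sum_(l < d) `|invmx A k l| * Mf.
  move=> b k; apply: le_trans (ler_norm_sum _ _ _) _.
  apply: ler_sum => l _; rewrite normrM; apply: ler_wpM2l => //.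
have m0 : 0 < `|f x0| by rewrite normr_gt0.
have C1 : 0 < Cc + 1 by apply: ltr_wpDl.
pose eps := `|f x0| / (Cc + 1).
have eps0 : 0 < eps by apply: divr_gt0.
have [K [cK hK]] := C0_eps hf eps0.
pose Fk k := (fun w => inv (mul (mul (inv x0) w) (inv (ys k)))) @` K.
apply: (@subclosed_compact _ _ (\big[setU/set0]_(k < d) Fk k)).
- exact: S_closed.
- apply: bigsetU_compact => k _; apply: continuous_compact => //.
  apply: continuous_subspaceT => w.
  apply: (continuous_comp _ (cont_inv hG _)).
  apply: (cont_mul2 hG); [exact: (cont_mull hG)|exact: (cont_cst (inv (ys k)))].
move=> b Sb.
have [[k Kk]|nK] := pselect (exists k, K (mul (mul x0 (inv b)) (ys k))).
  rewrite -bigcup_seq; exists k; first exact: mem_index_enum.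
  exists (mul (mul x0 (inv b)) (ys k)) => //.
  rewrite (gA hG (inv x0)) (gKl hG) -(gA hG) (gxV hG) (gx1 hG).
  exact: (gVK hG).
exfalso.
have : `|f x0| <= Cc * eps.
  have -> : f x0 = f (mul (mul x0 (inv b)) b) by rewrite -(gA hG) (gVx hG) (gx1 hG).
  rewrite S_Phi //; apply: le_trans (ler_norm_sum _ _ _) _.
  rewrite /Cc mulr_suml; apply: ler_sum => k _; rewrite normrM.
  apply: ler_pM; [exact: normr_ge0|exact: normr_ge0|exact: hb|].
  apply: ltW; apply: hK => Kk; apply: nK; by exists k.
move=> hle; have hlt : Cc * eps < `|f x0|.
  by rewrite /eps mulrA ltr_pdivrMr // mulrDr mulr1 mulrC ltrDl.
by have := le_lt_trans hle hlt; rewrite ltxx.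
Qed.

End Fixed.
Lemma C0_tr a : C0 (fun x => f (mul x a)).
Proof.
split.
  by move=> x; exact: continuous_comp (cont_mulr hG a x) (hf.1 _).
move=> eps e0; have [K [cK hK]] := hf.2 eps e0.
exists ((fun w => mul w (inv a)) @` K); split.
  apply: continuous_compact => //; apply: continuous_subspaceT.
  exact: (cont_mulr hG).
move=> x nx; apply: hK => Kx; apply: nx; exists (mul x a) => //.
by rewrite -(gA hG) (gxV hG) (gx1 hG).
Qed.

Lemma main_concl : exists H : set G,
    [/\ is_subgroup mul inv one H, compact H, open H &
      exists (f' g' : 'I_n -> G -> Cplx R),
        [/\ (forall j, C0 (f' j)),
            (forall j, {within H, continuous (g' j)}) &
            (forall x y, H y -> f (mul x y) = \sum_(j < n) f' j x * g' j y)]].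
Proof.
have [d [[xs [ys [hV hA]]] hmax]] := Pd_max.
have dn : (d <= n)%N by apply: Pd_le; exists xs, ys.
exists (Sg ys); split.
  split; first exact: S_one hV hA hmax.
  + by move=> a b; exact: S_mul.
  + by move=> a; exact: S_inv.
- exact: S_compact hV hA hmax.
- exact: S_open hV hA hmax.
exists (fun j => match (insub (val j) : option 'I_d) with
         Some k => (fun x => f (mul x (ys k))) | None => (fun _ => 0) end).
exists (fun j => match (insub (val j) : option 'I_d) with
         Some k => h xs ys k | None => (fun _ => 0) end).
split.
- move=> j; case: (insub _) => [k|]; [exact: C0_tr|exact: C0_zero].
- move=> j; apply: continuous_subspaceT; case: (insub _) => [k|].
    exact: h_cont.
  by move=> y; exact: cvg_cst.
- move=> x y Sy; rewrite (S_Phi hV hA hmax Sy) (widen_sum dn).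
  by apply: eq_bigr => j _; case: (insub _) => [k|] //=; rewrite ?mul0r // mulrC.
Qed.

End Main.

Unset Implicit Arguments.

Theorem corollary1p3 (R : realType) (G : topologicalType)
    (mul : G -> G -> G) (inv : G -> G) (one : G)
    (n : nat) (f g : G -> Cplx R) (fs gs : 'I_n -> G -> Cplx R) :
  is_locally_compact_group mul inv one ->
  C0 f -> C0 g -> (forall i, C0 (fs i)) -> (forall i, C0 (gs i)) ->
  f <> (fun _ => 0) -> g <> (fun _ => 0) ->
  (forall i, fs i <> (fun _ => 0)) -> (forall i, gs i <> (fun _ => 0)) ->
  (forall x y, f (mul x y) * g y = \sum_(i < n) fs i x * gs i y) ->
  exists H : set G,
    [/\ is_subgroup mul inv one H, compact H, open H &
      exists (f' g' : 'I_n -> G -> Cplx R),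
        [/\ (forall j, C0 (f' j)),
            (forall j, {within H, continuous (g' j)}) &
            (forall x y, H y -> f (mul x y) = \sum_(j < n) f' j x * g' j y)]].
Proof.
move=> hLC hf hg _ _ fnz gnz _ _ hfg.
case: hLC => hG _ _.
have [x0 fx0] : exists x0, f x0 != 0.
  apply: contrapT => hn; apply: fnz; apply: funext => x; apply/eqP.
  by apply: contrapT => hx; apply: hn; exists x; apply/negP.
have [u0 gu0] : exists u0, g u0 != 0.
  apply: contrapT => hn; apply: gnz; apply: funext => x; apply/eqP.
  by apply: contrapT => hx; apply: hn; exists x; apply/negP.
exact: (main_concl hG hf hg hfg fx0 gu0).
Qed.
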